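(* Let $C$ be a compact Lie group, let $W$ be a finite-dimensional real $C$-module and let $w\in W$ be such that the orbit $Cw$ spans $W$. Then $L:=\{g\in\operatorname{GL}(W)\mid gCw=Cw\}$ is compact. *)

(* Defs.v *)
From HB Require Import structures.
From mathcomp Require Import all_boot all_order all_algebra.
From mathcomp Require Import all_classical all_reals all_analysis.
Set Implicit Arguments. Unset Strict Implicit. Unset Printing Implicit Defensive.
Import Order.TTheory GRing.Theory Num.Theory.
Import numFieldNormedType.Exports.
Local Open Scope ring_scope.
Local Open Scope classical_set_scope.

Definition compact_topological_group (C : topologicalType)
  (mul : C -> C -> C) (one : C) (inv : C -> C) : Prop :=
  (forall a b c, mul a (mul b c) = mul (mul a b) c) /\
  (forall a, mul one a = a /\ mul a one = a) /\
  (forall a, mul (inv a) a = one /\ mul a (inv a) = one) /\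
  continuous (fun p : C * C => mul p.1 p.2) /\
  continuous inv /\
  compact [set: C].

(* rho : C -> GL_n(R) is a continuous representation of C on W = R^n
   (column vectors, left action v |-> rho c *m v). *)
Definition continuous_rep (R : realType) (n : nat) (C : topologicalType)
  (mul : C -> C -> C) (one : C) (rho : C -> 'M[R]_(n, n)) : Prop :=
  [/\ continuous rho,
      rho one = 1%:M &
      (forall a b, rho (mul a b) = rho a *m rho b)].

Definition orbit_set (R : realType) (n : nat) (C : Type)
  (rho : C -> 'M[R]_(n, n)) (w : 'cV[R]_n) : set 'cV[R]_n :=
  [set rho c *m w | c in [set: C]].

Definition spans (R : realType) (n : nat) (S : set 'cV[R]_n) : Prop :=
  forall v : 'cV[R]_n, exists (k : nat) (coef : 'I_k -> R) (x : 'I_k -> 'cV[R]_n),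
    (forall i, S (x i)) /\ v = \sum_(i < k) coef i *: x i.

Definition stabilizer_GL (R : realType) (n : nat) (O : set 'cV[R]_n)
  : set 'M[R]_(n, n) :=
  [set g | g \in unitmx /\ [set g *m x | x in O] = O].

(* Main.v *)
Require Import Defs.
From HB Require Import structures.
From mathcomp Require Import all_boot all_order all_algebra.
From mathcomp Require Import all_classical all_reals all_analysis.
Import Order.TTheory GRing.Theory Num.Theory.
Import numFieldNormedType.Exports.
Local Open Scope ring_scope.
Local Open Scope classical_set_scope.

Lemma mx_cont_entries {X T : topologicalType} m k (f : X -> 'M[T]_(m, k)) :
  (forall i j, continuous (fun x => f x i j)) -> continuous f.
Proof.
move=> fc x A [P Pn PA].
apply: (filterS (fun y Hy => PA (f y) Hy)).
apply: filter_forall => i; apply: filter_forall => j.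
exact: (fc i j x _ (Pn i j)).
Qed.

Lemma fst_cont {U V : topologicalType} : continuous (@fst U V).
Proof. by move=> p; apply: cvg_fst. Qed.

Lemma snd_cont {U V : topologicalType} : continuous (@snd U V).
Proof. by move=> p; apply: cvg_snd. Qed.

Section Hlp.
Variable R : realType.

Lemma sum_cont {X : topologicalType} (I : Type) (s : seq I) (F : I -> X -> R) :
  (forall i, continuous (F i)) -> continuous (fun x => \sum_(i <- s) F i x).
Proof.
move=> Fc; elim: s => [|a s IH].
  under eq_fun do rewrite big_nil; exact: cst_continuous.
under eq_fun do rewrite big_cons.
move=> x; exact: (@continuousD _ R^o _ (F a) (fun x => \sum_(i <- s) F i x) x (Fc a x) (IH x)).
Qed.

Lemma mulmx_cont {X : topologicalType} m k p (F : X -> 'M[R]_(m, k))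
  (G : X -> 'M[R]_(k, p)) :
  continuous F -> continuous G -> continuous (fun x => F x *m G x).
Proof.
move=> Fc Gc; apply: mx_cont_entries => i j.
under eq_fun do rewrite mxE.
apply: sum_cont => l x; apply: continuousM.
  exact: (@continuous_comp _ _ _ F (fun M : 'M[R]_(m, k) => M i l) x (Fc x) (@coord_continuous R _ _ i l (F x))).
exact: (@continuous_comp _ _ _ G (fun M : 'M[R]_(k, p) => M l j) x (Gc x) (@coord_continuous R _ _ l j (G x))).
Qed.

Lemma entry_le m k (x : 'M[R]_(m, k)) i j : `|x i j| <= `|x|.
Proof.
rewrite [leRHS]/Num.norm /= mx_normrE; apply/bigmax_geP; right => /=.
by exists (i, j).
Qed.

Lemma cube_compact m k (b : R) :
  compact [set M : 'M[R]_(m, k) | forall i j, `|M i j| <= b].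
Proof.
pose V := [set v : 'rV[R]_(m * k) | forall i, `[-b, b]%classic (v ord0 i)].
have cV : compact V.
  by apply: (@rV_compact _ _ (fun=> `[-b, b]%classic)) => _; exact: segment_compact.
pose phi (v : 'rV[R]_(m * k)) : 'M[R]_(m, k) := \matrix_(i, j) v ord0 (mxvec_index i j).
have phic : continuous phi.
  apply: mx_cont_entries => i j; under eq_fun do rewrite mxE.
  move=> v; exact: coord_continuous.
have := continuous_compact (continuous_subspaceT phic) cV.
congr compact; apply/seteqP; split.
  move=> _ [v Vv <-] i j; rewrite mxE.
  by have := Vv (mxvec_index i j); rewrite /= in_itv /= -ler_norml.
move=> M HM; exists (mxvec M).
  move=> i; case/mxvec_indexP: i => i j; rewrite mxvecE /= in_itv /= -ler_norml.
  exact: HM.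
by apply/matrixP => i j; rewrite mxE mxvecE.
Qed.
End Hlp.

Theorem proposition2p2 (R : realType) (n : nat) (C : topologicalType)
  (mul : C -> C -> C) (one : C) (inv : C -> C) (rho : C -> 'M[R]_(n, n))
  (w : 'cV[R]_n) :
  compact_topological_group mul one inv ->
  continuous_rep mul one rho ->
  spans (orbit_set rho w) ->
  compact (stabilizer_GL (orbit_set rho w)).
Proof.
move=> [_ [_ [_ [_ [_ Ccomp]]]]] [rhoc _ _] span.
have Ocomp : compact (orbit_set rho w).
  apply: continuous_compact Ccomp; apply: continuous_subspaceT.
  exact: (@mulmx_cont R C n n 1 rho (fun=> w) rhoc (@cst_continuous C _ w)).
have Ocl : closed (orbit_set rho w) := compact_closed (@norm_hausdorff _ _) Ocomp.
have [b [breal Hb]] := compact_bounded Ocomp.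
have Hb' : forall x, orbit_set rho w x -> `|x| <= b + 1.
  by move=> x Ox; apply: (Hb (b + 1)) => //; rewrite ltrDl.
pose B' := \bigcap_(x in orbit_set rho w)
   [set g : 'M[R]_n | orbit_set rho w (g *m x)].
have B'cl : closed B'.
  apply: closed_bigI => x _.
  apply: (proj1 (continuous_closedP (fun g : 'M[R]_n => g *m x))) => //.
  exact: (@mulmx_cont R _ n n 1 id (fun=> x) (fun z => cvg_id) (@cst_continuous _ _ x)).
have bound : forall j : 'I_n, exists c : R, forall g, B' g -> forall a, `|g a j| <= c.
  move=> j; have [k [coef [x [xO ej]]]] := span (delta_mx j 0).
  exists (\sum_(i < k) `|coef i| * (b + 1)) => g Bg a.
  have -> : g a j = (g *m (delta_mx j 0 : 'cV[R]_n)) a 0.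
    rewrite mxE (bigD1 j) //= big1 ?addr0 => [|l /negbTE ljF].
      by rewrite !mxE eqxx /= mulr1.
    by rewrite !mxE ljF /= mulr0.
  rewrite ej mulmx_sumr summxE.
  apply: le_trans (ler_norm_sum _ _ _) _; apply: ler_sum => i _.
  rewrite -scalemxAr mxE normrM ler_wpM2l //.
  by apply: le_trans (@entry_le R _ _ (g *m x i) a 0) _; apply: Hb'; apply: Bg.
have [cf Hcf] := choice bound.
pose bb := \sum_j `|cf j|.
have Bcube : forall g, B' g -> forall a j, `|g a j| <= bb.
  move=> g Bg a j; apply: le_trans (Hcf j g Bg a) _.
  apply: le_trans (ler_norm _) _; rewrite /bb (bigD1 j) //= lerDl.
  by apply: sumr_ge0 => *; exact: normr_ge0.
pose K := [set p : 'M[R]_n * 'M[R]_n | p.1 *m p.2 = 1%:M] `&`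
   ((fst @^-1` B') `&` (snd @^-1` B')).
have Kcl : closed K.
  apply: closedI; last apply: closedI.
  - have h1 := @mulmx_cont R _ n n n fst snd fst_cont snd_cont.
    have c1 : closed [set (1%:M : 'M[R]_n)].
      apply: accessible_closed_set1; apply: hausdorff_accessible; exact: norm_hausdorff.
    exact: ((proj1 (continuous_closedP _)) h1 _ c1).
  - exact: (proj1 (continuous_closedP fst)) fst_cont _ B'cl.
  - exact: (proj1 (continuous_closedP snd)) snd_cont _ B'cl.
have Kcomp : compact K.
  apply: (subclosed_compact Kcl (compact_setX (cube_compact R n n bb) (cube_compact R n n bb))).
  by move=> [g h] [_ [Bg Bh]]; split; apply: Bcube.
have -> : stabilizer_GL (orbit_set rho w) = fst @` K.
  apply/seteqP; split.
    move=> g [gu gO]; exists (g, invmx g) => //; split; first by rewrite /= mulmxV.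
    split => x Ox /=; first by rewrite -gO; exists x.
    by move: Ox; rewrite -{1}gO => -[y Oy <-]; rewrite mulKmx.
  move=> _ [[g h] [/= gh [Bg Bh]] <-] /=; split; first by case: (mulmx1_unit gh).
  apply/seteqP; split; first by move=> _ [x Ox <-]; exact: Bg.
  move=> y Oy; exists (h *m y); first exact: Bh.
  by rewrite mulmxA gh mul1mx.
apply: continuous_compact Kcomp; exact: continuous_subspaceT fst_cont.
Qed.
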